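(* For every $K\geq 2$ there exists a map $f:[0,1]\to[0,1]$ without forbidden order patterns of length $L\leq K$; that is, for every $2\leq L\leq K$ and every $\pi\in\mathcal{S}_L$ there is $x\in[0,1]$ that defines $\pi$ under $f$.
   Context: $\mathcal{S}_L$ is the set of permutations $\pi=[\pi_0,\dots,\pi_{L-1}]$ of $\{0,\dots,L-1\}$. A point $x$ defines $\pi$ under $f$ if $f^{\pi_0}(x)<f^{\pi_1}(x)<\dots<f^{\pi_{L-1}}(x)$, with $f^0(x)=x$. A pattern $\pi$ is forbidden for $f$ if no point defines it. *)

(* Defs.v *)
From Stdlib Require Import Reals.
From HB Require Import structures.
From mathcomp Require Import all_boot all_order all_algebra all_fingroup.
From mathcomp Require Import Rstruct.
Set Implicit Arguments. Unset Strict Implicit. Unset Printing Implicit Defensive.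
Import Order.TTheory GRing.Theory Num.Theory.
Local Open Scope ring_scope.

Definition fiter (f : Rdefinitions.R -> Rdefinitions.R) (k : nat) (x : Rdefinitions.R) : R := iter k f x.

Definition defines (f : Rdefinitions.R -> Rdefinitions.R) (x : Rdefinitions.R) (L : nat) (pi : 'S_L) : bool :=
  sorted (fun a b : nat => fiter f a x < fiter f b x)
         [seq nat_of_ord (pi i) | i <- enum 'I_L].

Definition maps_unit_interval (f : Rdefinitions.R -> Rdefinitions.R) : Prop :=
  forall x : Rdefinitions.R, 0 <= x <= 1 -> 0 <= f x <= 1.

(* Main.v *)
Require Import Defs.
From Stdlib Require Import Reals.
From HB Require Import structures.
From mathcomp Require Import all_boot all_order all_algebra all_fingroup.
From mathcomp Require Import Rstruct.
Import Order.TTheory GRing.Theory Num.Theory.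
Local Open Scope ring_scope.

Section Aux.
Variable K : nat.
Definition BB : Rdefinitions.R := (K.+2)%:R.
Definition ff (x : Rdefinitions.R) := BB * x - (Num.floor (BB * x))%:~R.
Variable d : nat -> nat.
Fixpoint gg (n k : nat) :=
  match n with 0 => (0 : Rdefinitions.R) | n'.+1 => ((d k)%:R + gg n' k.+1) / BB end.

Lemma gg_S n k : gg n.+1 k = ((d k)%:R + gg n k.+1) / BB.
Proof. by []. Qed.

Lemma BB_gt0 : 0 < BB. Proof. by rewrite /BB ltr0n. Qed.

Lemma gg_bnd (hd : forall k, (d k <= K.+1)%N) n k : 0 <= gg n k < 1.
Proof.
elim: n k => [|n IH] k /=; first by rewrite lexx ltr01.
have /andP[h0 h1] := IH k.+1.
have hB := ltW BB_gt0; rewrite divr_ge0 ?addr_ge0 ?ler0n ?hB //.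
rewrite ltr_pdivrMr ?BB_gt0 // mul1r /BB -(addn1 K.+1) natrD.
  by apply: ler_ltD; rewrite ?ler_nat.
exact: (ler0n _ K.+1).
Qed.

Lemma ff_gg (hd : forall k, (d k <= K.+1)%N) n k : ff (gg n.+1 k) = gg n k.+1.
Proof.
have /andP[h0 h1] := gg_bnd hd n k.+1.
rewrite /ff gg_S !(mulrC BB) !divfK ?(gt_eqF BB_gt0) //.
rewrite (@floor_def _ _ (d k)%:Z); first by rewrite -pmulrn addrAC subrr add0r.
rewrite -pmulrn intrD -pmulrn.
by rewrite lerDl h0 ltrD2l.
Qed.

Lemma iter_gg (hd : forall k, (d k <= K.+1)%N) k : (k <= K)%N ->
  iter k ff (gg K 0) = gg (K - k) k.
Proof.
elim: k => [|k IH] hk; first by rewrite subn0.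
rewrite iterS IH ?(ltnW hk) //.
have -> : (K - k = (K - k.+1).+1)%N by rewrite subnSK.
by rewrite ff_gg.
Qed.
End Aux.
Arguments gg_bnd {K d}. Arguments iter_gg {K d}.

Theorem corollary1 (K : nat) (hK : (2 <= K)%N) :
  exists f : Rdefinitions.R -> Rdefinitions.R, maps_unit_interval f /\
    forall (L : nat), (2 <= L)%N -> (L <= K)%N ->
    forall pi : 'S_L, exists x : Rdefinitions.R, 0 <= x <= 1 /\ defines f x pi.
Proof.
exists (ff K); split.
  move=> x _; rewrite /ff subr_ge0 floor_le /=.
  have := floorD1_gt (BB K * x); rewrite intrD => h.
  by rewrite lerBlDl ltW // addrC.
move=> L _ hL pi.
set s := [seq nat_of_ord (pi i) | i <- enum 'I_L].
pose d k := (index k s).+1.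
have hd : forall k, (d k <= K.+1)%N.
  move=> k; rewrite /d ltnS (leq_trans (index_size k s)) //.
  by rewrite /s size_map size_enum_ord.
have us : uniq s.
  rewrite map_inj_uniq ?enum_uniq // => i j /val_inj; exact: perm_inj.
exists (gg K d K 0); split.
  by have /andP[h0 h1] := gg_bnd hd K 0; rewrite h0 ltW.
rewrite /defines -/s.
apply: (@sub_in_sorted _ (fun a => (a < K)%N) (relpre d ltn)).
- move=> a b ha hb hab; rewrite /fiter (iter_gg hd a); last exact: ltnW.
  rewrite (iter_gg hd b); last exact: ltnW.
  have -> : (K - a = (K - a.+1).+1)%N by rewrite subnSK.
  have -> : (K - b = (K - b.+1).+1)%N by rewrite subnSK.
  rewrite !gg_S ltr_pM2r ?invr_gt0 ?BB_gt0 //.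
  have /andP[_ h1] := gg_bnd hd (K - a.+1) a.+1.
  have /andP[h0 _] := gg_bnd hd (K - b.+1) b.+1.
  apply: (lt_le_trans (y := (d a).+1%:R)).
    by rewrite -[(d a).+1]addn1 natrD ltrD2l.
  by rewrite -[X in X <= _]addr0 lerD // ler_nat.
- apply/allP => a /mapP[i _ ->]; exact: leq_trans (ltn_ord _) hL.
- rewrite -sorted_map.
  have -> : [seq d x | x <- s] = [seq i.+1 | i <- iota 0 (size s)].
    transitivity (map succn (map (index^~ s) s)); first by rewrite -map_comp.
    congr map.
    have e := map_nth_iota0 0 (leqnn (size s)); rewrite take_size in e.
    transitivity (map (index^~ s) (map (nth 0%N s) (iota 0 (size s)))); first by rewrite e.
    rewrite -map_comp -{2}(map_id (iota 0 (size s))).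
    apply/eq_in_map => i; rewrite mem_iota /= add0n => hi.
    by rewrite index_uniq.
  rewrite sorted_map; exact: iota_ltn_sorted.
Qed.
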